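(* Let $K$ be a number field and let $\alpha>0$ and $\beta>0$ be two algebraically independent real numbers. Suppose $F(x)\in K[[x^{\mathbb{R}}]]$ is a Hahn series that is both $\alpha$-Mahler and $\beta$-Mahler. Then $F(x)$ is rational, i.e. $F(x)\in K(x)$.
   Context: A Hahn series over $K$ with exponent group $\mathbb{R}$ is a formal expression $F(x)=\sum_{i\in\mathbb{R}} f_i x^i$ with $f_i\in K$ whose support $P(F)=\{i: f_i\neq 0\}$ is well-ordered; these form a field $K[[x^{\mathbb{R}}]]$ containing $K(x)$. For $\gamma>0$, $F(x^\gamma)=\sum_i f_i x^{\gamma i}$. For real $\gamma>0$, $F$ is $\gamma$-Mahler if there exist $d\ge0$ and polynomials $P_0,\dots,P_d,A\in K[x]$, not all $P_i$ zero, with $\sum_{i=0}^d P_i(x)F(x^{\gamma^i})=A(x)$. *)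

(* Defs.v *)
From HB Require Import structures.
From mathcomp Require Import all_boot all_order all_algebra all_field.
From mathcomp Require Import reals.
Set Implicit Arguments. Unset Strict Implicit. Unset Printing Implicit Defensive.
Import Order.TTheory GRing.Theory Num.Theory.
Local Open Scope ring_scope.

(* A number field is represented as a finite-dimensional field extension of Q. *)
(* Hahn series over K with exponent group R (R : realType, i.e. the reals)   *)
(* are represented by their coefficient function R -> K, subject to          *)
(* [is_hahn] (well-ordered support).                                         *)

Definition well_ordered_set (R : realType) (S : R -> Prop) : Prop :=
  forall A : R -> Prop, (forall e, A e -> S e) -> (exists e, A e) ->
    exists m, A m /\ forall e, A e -> m <= e.

Definition hahn_support (R : realType) (K : fieldType) (F : R -> K) : R -> Prop :=
  fun e => F e != 0.

Definition is_hahn (R : realType) (K : fieldType) (F : R -> K) : Prop :=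
  well_ordered_set (hahn_support F).

(* F(x^gamma) : coefficient of x^e is the coefficient of x^(e/gamma) in F *)
Definition hahn_subst (R : realType) (K : fieldType) (gamma : R) (F : R -> K)
  : R -> K := fun e => F (e / gamma).

Definition hahn_pmul (R : realType) (K : fieldType) (P : {poly K}) (G : R -> K)
  : R -> K := fun e => \sum_(k < size P) P`_k * G (e - k%:R).

Definition hahn_of_poly (R : realType) (K : fieldType) (A : {poly K}) : R -> K :=
  fun e => \sum_(k < size A) (if e == k%:R then A`_k else 0).

(* F is gamma-Mahler: sum_{i=0}^d P_i(x) F(x^{gamma^i}) = A(x), not all P_i zero *)
Definition is_mahler (R : realType) (K : fieldType) (gamma : R) (F : R -> K) : Prop :=
  exists (d : nat) (P : nat -> {poly K}) (A : {poly K}),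
    (exists i, (i <= d)%N /\ P i != 0) /\
    forall e : R,
      \sum_(i < d.+1) hahn_pmul (P i) (hahn_subst (gamma ^+ i) F) e
      = @hahn_of_poly R K A e.

(* F lies in K(x) (inside the Hahn series field): F = P/Q with Q != 0 *)
Definition is_rational_hahn (R : realType) (K : fieldType) (F : R -> K) : Prop :=
  exists (P Q : {poly K}), Q != 0 /\
    forall e : R, hahn_pmul Q F e = @hahn_of_poly R K P e.

(* alpha, beta algebraically independent over Q: no nonzero bivariate
   rational polynomial p(X,Y) vanishes at (alpha, beta).
   p : {poly {poly rat}} is read with inner variable X and outer variable Y. *)
Definition alg_indep2 (R : realType) (alpha beta : R) : Prop :=
  forall p : {poly {poly rat}}, p != 0 ->
    (map_poly (map_poly (ratr : rat -> R)) p).[beta%:P].[alpha] != 0.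

(* Main.v *)
Require Import Defs.
From HB Require Import structures.
From mathcomp Require Import all_boot all_order all_algebra all_field.
From mathcomp Require Import reals.
From Stdlib Require Import Classical.
Set Implicit Arguments. Unset Strict Implicit. Unset Printing Implicit Defensive.
Import Order.TTheory GRing.Theory Num.Theory.
Local Open Scope ring_scope.

Definition isZ (R : realType) (e : R) := exists z : int, e = z%:~R.

Lemma trans_of (R : realType) (alpha beta : R) : alg_indep2 alpha beta ->
  (forall q : {poly rat}, q != 0 -> (map_poly ratr q).[alpha] != 0) /\
  (forall q : {poly rat}, q != 0 -> (map_poly ratr q).[beta] != 0).
Proof.
move=> H; split => q q0.
  have := H q%:P; rewrite polyC_eq0 => /(_ q0).
  by rewrite map_polyC /= hornerC.
have := H (map_poly polyC q).
rewrite map_poly_eq0 => /(_ q0).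
rewrite -map_poly_comp.
have -> : map_poly (map_poly (ratr : rat -> R) \o polyC) q = map_poly (polyC \o (ratr : rat -> R)) q.
  by apply: eq_map_poly => x /=; rewrite map_polyC.
by rewrite map_poly_comp horner_map /= hornerC.
Qed.

Lemma coef_rel (R : realType) (g : R) :
  (forall q : {poly rat}, q != 0 -> (map_poly ratr q).[g] != 0) ->
  forall (u1 c1 u2 c2 : rat) (i j : nat),
  ratr u1 * g ^+ i + ratr c1 = ratr u2 * g ^+ j + ratr c2 ->
  forall n : nat, u1 * (n == i)%:R + (if n == 0%N then c1 else 0)
    = u2 * (n == j)%:R + (if n == 0%N then c2 else 0).
Proof.
move=> T u1 c1 u2 c2 i j E n.
set q := u1 *: 'X^i + c1%:P - (u2 *: 'X^j + c2%:P).
have q0 : q = 0.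
  apply/eqP; apply: contraT => qn0; have := T q qn0.
  rewrite /q rmorphB rmorphD rmorphD /= !map_polyZ !map_polyXn !map_polyC /=.
  by rewrite !hornerE E subrr eqxx.
have := congr1 (fun p : {poly rat} => p`_n) q0.
rewrite /q !coefE /=.
by move/eqP; rewrite subr_eq0 => /eqP.
Qed.

Lemma map_polyC_comm (R : realType) (d : {poly rat}) :
  map_poly (map_poly (ratr : rat -> R)) (map_poly polyC d)
  = map_poly polyC (map_poly ratr d).
Proof.
rewrite -!map_poly_comp; apply: eq_map_poly => x /=; by rewrite map_polyC.
Qed.

Lemma combine (R : realType) (alpha beta e : R) (a b c d : {poly rat}) :
  alg_indep2 alpha beta -> a != 0 -> c != 0 ->
  e * (map_poly ratr a).[alpha] = (map_poly ratr b).[alpha] ->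
  e * (map_poly ratr c).[beta] = (map_poly ratr d).[beta] ->
  exists r : rat, e = ratr r.
Proof.
move=> H a0 c0 Ea Ec.
set p : {poly {poly rat}} := a%:P * map_poly polyC d - b%:P * map_poly polyC c.
have p0 : p = 0.
  apply/eqP; apply: contraT => pn0; have := H p pn0.
  rewrite /p rmorphB !rmorphM /= !map_polyC /= !map_polyC_comm.
  rewrite !hornerE !horner_map /= !hornerE.
  by rewrite -Ea -Ec mulrCA mulrA subrr eqxx.
pose k := (size c).-1.
have := congr1 (fun q : {poly {poly rat}} => q`_k) p0.
rewrite /p coefB !coefCM !coef_map /= coef0 => /eqP; rewrite subr_eq0 => /eqP E.
have ck0 : c`_k != 0 by rewrite /k -lead_coefE lead_coef_eq0.
exists (d`_k / c`_k).
have Eb : b = a * (d`_k / c`_k)%:P.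
  by rewrite polyCM mulrA E -mulrA -polyCM mulfV // mulr1.
have := (trans_of H).1 a a0.
move: Ea; rewrite Eb rmorphM /= map_polyC /= hornerE hornerC => Ea An0.
by apply: (mulIf An0); rewrite Ea mulrC.
Qed.

Lemma single_term (R : realType) (K : fieldType) (g : R) (F : R -> K) d
  (P : nat -> {poly K}) (A : {poly K}) (e0 : R) (i0 k0 : nat) :
  (forall e, \sum_(i < d.+1) hahn_pmul (P i) (hahn_subst (g ^+ i) F) e
     = hahn_of_poly A e) ->
  (i0 < d.+1)%N ->
  (forall n : nat, (n < size A)%N -> e0 != n%:R) ->
  (forall (j : 'I_d.+1) (k : nat), (k < size (P j))%N ->
     (nat_of_ord j, k) <> (i0, k0) ->
     (P j)`_k * F ((e0 - k%:R) / g ^+ j) = 0) ->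
  (P i0)`_k0 * F ((e0 - k0%:R) / g ^+ i0) = 0.
Proof.
move=> Heq hi0 HA Hj.
have := Heq e0.
have -> : hahn_of_poly A e0 = 0.
  by apply: big1 => k _; rewrite (negPf (HA k (ltn_ord k))).
rewrite (bigD1 (Ordinal hi0)) //= big1 ?addr0; last first.
  move=> j /= jne; rewrite /hahn_pmul; apply: big1 => k _; rewrite /hahn_subst.
  apply: Hj => // -[ej _]; move: jne; suff -> : j = Ordinal hi0 by rewrite eqxx.
  exact: val_inj.
rewrite /hahn_pmul /hahn_subst /=.
case: (ltnP k0 (size (P i0))) => hk0; last by rewrite nth_default // mul0r.
rewrite (bigD1 (Ordinal hk0)) //= big1 ?addr0 //.
move=> k kne; apply: (Hj (Ordinal hi0)) => // -[ek]; move: kne; suff -> : k = Ordinal hk0 by rewrite eqxx.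
exact: val_inj.
Qed.

Lemma fin_min (R : realType) (T : finType) (Q : pred T) (f : T -> R) (x0 : T) :
  Q x0 -> exists x, Q x /\ forall y, Q y -> f x <= f y.
Proof.
move=> Qx0.
have gen : forall s : seq T, s != [::] ->
    exists x, x \in s /\ forall y, y \in s -> f x <= f y.
  elim=> [//|a s IH] _; case: (eqVneq s [::]) => [->|sn0].
    by exists a; split; rewrite ?mem_head // => y; rewrite inE => /eqP->.
  have [x [xs Hx]] := IH sn0.
  case: (leP (f a) (f x)) => hax.
    exists a; split; first exact: mem_head.
    move=> y; rewrite inE => /orP[/eqP->//|ys]; exact: le_trans hax (Hx y ys).
  exists x; split; first by rewrite inE xs orbT.
  move=> y; rewrite inE => /orP[/eqP->|ys]; [exact: ltW| exact: Hx].
have [|x [xs Hx]] := gen [seq y <- enum T | Q y].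
  apply/eqP => E; have : x0 \in [seq y <- enum T | Q y] by rewrite mem_filter Qx0 mem_enum.
  by rewrite E.
exists x; split; first by move: xs; rewrite mem_filter => /andP[].
by move=> y Qy; apply: Hx; rewrite mem_filter Qy mem_enum.
Qed.

Lemma natz_intr (R : realType) (n : nat) : (n%:Z)%:~R = n%:R :> R.
Proof. by []. Qed.

Lemma key (R : realType) (K : fieldType) (g : R) (F : R -> K) d
  (P : nat -> {poly K}) (A : {poly K}) (es : R) :
  0 < g -> (exists i, (i <= d)%N /\ P i != 0) ->
  (forall e, \sum_(i < d.+1) hahn_pmul (P i) (hahn_subst (g ^+ i) F) e
     = hahn_of_poly A e) ->
  F es != 0 -> ~ isZ es -> (forall s, F s != 0 -> ~ isZ s -> es <= s) ->
  exists (i j : nat) (z c : int),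
    (i != j /\ es * g ^+ i = es * g ^+ j + c%:~R)
    \/ es * g ^+ i = z%:~R * g ^+ j + c%:~R.
Proof.
move=> g0 [i1 [hi1 Pi1]] Heq Fes nZ Hmin.
apply: NNPP => Hn.
pose B := \max_(i < d.+1) size (P i).
have szB : forall j : 'I_d.+1, (size (P j) <= B)%N.
  by move=> j; exact: (leq_bigmax j).
pose T := ('I_d.+1 * 'I_B)%type.
pose Qp := fun p : T => (P p.1)`_p.2 != 0.
pose f := fun p : T => es * g ^+ p.1 + (p.2 : nat)%:R.
have hi1' : (i1 < d.+1)%N by [].
have sz1 : (0 < size (P i1))%N by rewrite size_poly_gt0.
have k1B : ((size (P i1)).-1 < B)%N.
  by rewrite (leq_trans _ (szB (Ordinal hi1'))) // prednK.
have Q1 : Qp (Ordinal hi1', Ordinal k1B) by rewrite /Qp /= -lead_coefE lead_coef_eq0.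
have [[i0 k0] [Q0 Hm]] := fin_min f Q1.
pose e0 := f (i0, k0).
have gj0 : forall j : nat, g ^+ j != 0 by move=> j; rewrite expf_neq0 // gt_eqF.
have gjp : forall j : nat, 0 < g ^+ j by move=> j; rewrite exprn_gt0.
have He0 : (e0 - (k0 : nat)%:R) / g ^+ i0 = es by rewrite /e0 /f /= addrK mulfK.
have := single_term Heq (ltn_ord i0) (e0 := e0) (k0 := k0).
rewrite He0 => H.
have : (P i0)`_k0 * F es != 0 by rewrite mulf_neq0.
move/eqP; apply; apply: H.
- move=> n nA; apply/eqP => E; apply: Hn.
  exists i0, 0%N, 0, (n%:Z - (k0 : nat)%:Z); right.
  rewrite mul0r add0r intrB !natz_intr -E /e0 /f /=.
  by rewrite addrK.
- move=> j k kP jk.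
  case: (eqVneq ((P j)`_k) 0) => [->|Pk]; first by rewrite mul0r.
  set s := (e0 - k%:R) / g ^+ j.
  case: (eqVneq (F s) 0) => [->|Fs]; first by rewrite mulr0.
  exfalso.
  have Es : s * g ^+ j + k%:R = e0 by rewrite /s divfK // subrK.
  case: (classic (isZ s)) => [[z Ez]|nZs].
    apply: Hn; exists i0, j, z, ((k : nat)%:Z - (k0 : nat)%:Z); right.
    rewrite intrB !natz_intr -Ez.
    by rewrite addrA Es /e0 /f /= addrK.
  have les := Hmin s Fs nZs.
  have kB : (k < B)%N by exact: leq_trans kP (szB j).
  have := Hm (j, Ordinal kB); rewrite /Qp /= => /(_ Pk); rewrite -/e0 /f /= => H1.
  have H2 : es * g ^+ j + k%:R <= e0.
    by rewrite -Es lerD2r ler_pM2r.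
  have E2 : es * g ^+ j + k%:R = e0 by apply/eqP; rewrite eq_le H1 H2.
  case: (eqVneq (j : nat) (i0 : nat)) => [eji|nji].
    apply: jk; move: E2; rewrite /e0 /f /= eji => /addrI /eqP.
    by rewrite eqr_nat => /eqP ->.
  apply: Hn; exists i0, j, 0, ((k : nat)%:Z - (k0 : nat)%:Z); left; split.
    by rewrite eq_sym.
  rewrite intrB !natz_intr addrA E2 /e0 /f /=.
  by rewrite addrK.
Qed.

Lemma to_poly (R : realType) (g es : R) :
  (exists (i j : nat) (z c : int),
    (i != j /\ es * g ^+ i = es * g ^+ j + c%:~R)
    \/ es * g ^+ i = z%:~R * g ^+ j + c%:~R) ->
  exists a b : {poly rat}, a != 0 /\ es * (map_poly ratr a).[g] = (map_poly ratr b).[g].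
Proof.
move=> [i [j [z [c [[ij E]|E]]]]].
  exists ('X^i - 'X^j), (c%:~R)%:P; split.
    apply/eqP => /(congr1 (fun p : {poly rat} => p`_i)).
    by rewrite coefB !coefXn eqxx (negPf ij) subr0 coef0 => /eqP; rewrite oner_eq0.
  rewrite rmorphB /= !map_polyXn map_polyC /= !hornerE ratr_int.
  by rewrite mulrBr E addrC addKr.
exists 'X^i, (z%:~R *: 'X^j + (c%:~R)%:P); split.
  by rewrite monic_neq0 // monicXn.
rewrite rmorphD /= map_polyZ !map_polyXn map_polyC /= !hornerE !ratr_int.
by rewrite E.
Qed.

Lemma phase2 (R : realType) (K : fieldType) (g : R) (F : R -> K) d
  (P : nat -> {poly K}) (A : {poly K}) (i : nat) :
  0 < g ->
  (forall q : {poly rat}, q != 0 -> (map_poly ratr q).[g] != 0) ->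
  (forall e, \sum_(i < d.+1) hahn_pmul (P i) (hahn_subst (g ^+ i) F) e
     = hahn_of_poly A e) ->
  (forall s, F s != 0 -> isZ s) ->
  (0 < i)%N -> (i <= d)%N -> P i != 0 ->
  forall s, s != 0 -> F s = 0.
Proof.
move=> g0 Tg Heq HZ i0 id Pi s s0.
apply/eqP; apply: contraT => Fs.
have [z Ez] := HZ s Fs.
have z0 : z != 0 by apply: contraNneq s0 => z0; rewrite Ez z0.
have gj0 : forall j : nat, g ^+ j != 0 by move=> j; rewrite expf_neq0 // gt_eqF.
pose k0 := (size (P i)).-1.
have Pk0 : (P i)`_k0 != 0 by rewrite -lead_coefE lead_coef_eq0.
pose e0 := s * g ^+ i + k0%:R.
have He0 : (e0 - k0%:R) / g ^+ i = s by rewrite /e0 addrK mulfK.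
have hi : (i < d.+1)%N by [].
have := single_term Heq hi (e0 := e0) (k0 := k0).
rewrite He0 => H.
have : (P i)`_k0 * F s != 0 by rewrite mulf_neq0.
move/eqP => N; exfalso; apply: N; apply: H.
- move=> n nA; apply/eqP => E.
  have C := @coef_rel R g Tg z%:~R k0%:R 0 n%:R i 0%N.
  rewrite !ratr_int !rmorph_nat rmorph0 -Ez mul0r add0r -E in C.
  have := C erefl i.
  rewrite eqxx (negPf (lt0n_neq0 i0)) mul0r mulr1 !addr0 => /eqP.
  by rewrite intr_eq0 (negPf z0).
- move=> j k kP jk.
  case: (eqVneq ((P j)`_k) 0) => [->|Pk]; first by rewrite mul0r.
  set s' := (e0 - k%:R) / g ^+ j.
  case: (eqVneq (F s') 0) => [->|Fs']; first by rewrite mulr0.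
  exfalso.
  have Es : s' * g ^+ j + k%:R = e0 by rewrite /s' divfK // subrK.
  have [w Ew] := HZ s' Fs'.
  have C0 := @coef_rel R g Tg z%:~R k0%:R w%:~R k%:R i j.
  rewrite !ratr_int !rmorph_nat -Ez -Ew Es in C0.
  have C := C0 erefl.
  have := C i; rewrite eqxx (negPf (lt0n_neq0 i0)) mulr1 !addr0.
  case: (eqVneq i j) => [eij|nij]; last first.
    by rewrite mulr0 => /eqP; rewrite intr_eq0 (negPf z0).
  rewrite mulr1 => /eqP; rewrite eqr_int => /eqP zw.
  have := C 0%N; rewrite -eij eq_sym (negPf (lt0n_neq0 i0)) !mulr0 !add0r => /eqP.
  rewrite eqr_nat => /eqP kk; apply: jk; by rewrite -eij kk.
Qed.

Lemma final_contra (R : realType) (g : R) (r : rat) :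
  (forall q : {poly rat}, q != 0 -> (map_poly ratr q).[g] != 0) ->
  (forall z : int, r != z%:~R) ->
  (exists (i j : nat) (z c : int),
    (i != j /\ ratr r * g ^+ i = ratr r * g ^+ j + c%:~R)
    \/ ratr r * g ^+ i = z%:~R * g ^+ j + c%:~R) -> False.
Proof.
move=> Tg nZ [i [j [z [c [[ij E]|E]]]]].
  have C0 := @coef_rel R g Tg r 0 r c%:~R i j.
  rewrite rmorph0 addr0 ratr_int in C0; have C := C0 E.
  have [i0|in0] := eqVneq i 0%N.
    have jn0 : (j == 0%N) = false by apply/negbTE; rewrite -i0 eq_sym.
    have ji : (j == i) = false by rewrite eq_sym (negPf ij).
    have := C j; rewrite eqxx ji jn0 mulr0 mulr1 !addr0 => E0.
    by have := nZ 0; rewrite -E0 eqxx.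
  have := C i; rewrite eqxx (negPf ij) (negPf in0) mulr0 mulr1 !addr0 => E0.
  by have := nZ 0; rewrite E0 eqxx.
have C0 := @coef_rel R g Tg r 0 z%:~R c%:~R i j.
rewrite rmorph0 addr0 !ratr_int in C0; have C := C0 E.
have := C i; rewrite eqxx mulr1.
case: (eqVneq i 0%N) => [i0|in0]; case: (eqVneq i j) => [ij|nij];
  rewrite ?mulr1 ?mulr0 ?addr0 ?add0r => E0.
- by have := nZ (z + c); rewrite intrD E0 eqxx.
- by have := nZ c; rewrite E0 eqxx.
- by have := nZ z; rewrite E0 eqxx.
- by have := nZ 0; rewrite E0 eqxx.
Qed.

Theorem mainTheorem2 (R : realType) (K : fieldExtType rat)
  (alpha beta : R) (F : R -> K) :
  0 < alpha -> 0 < beta -> alg_indep2 alpha beta ->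
  is_hahn F -> is_mahler alpha F -> is_mahler beta F ->
  is_rational_hahn F.
Proof.
move=> a0 b0 Hab Hh [dA [PA [AA [HneA HeqA]]]] [dB [PB [AB [HneB HeqB]]]].
have [Ta Tb] := trans_of Hab.
have HZ : forall s, F s != 0 -> isZ s.
  move=> s Fs; apply: NNPP => nZs.
  have [es [[Fes nZes] Hmin]] := Hh (fun e => F e != 0 /\ ~ isZ e)
    (fun e h => h.1) (ex_intro _ s (conj Fs nZs)).
  have Hmin' : forall s, F s != 0 -> ~ isZ s -> es <= s.
    by move=> t Ft nt; apply: Hmin.
  have KA := key a0 HneA HeqA Fes nZes Hmin'.
  have KB := key b0 HneB HeqB Fes nZes Hmin'.
  have [a [b [an0 Ea]]] := to_poly KA.
  have [c [d [cn0 Ec]]] := to_poly KB.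
  have [r er] := combine Hab an0 cn0 Ea Ec.
  apply: (final_contra Ta (r := r)); last by rewrite -er.
  move=> z; apply/eqP => rz; apply: nZes; exists z; by rewrite er rz ratr_int.
case: (classic (exists i, (0 < i)%N /\ (i <= dA)%N /\ PA i != 0)).
  move=> [i [i0 [id Pi]]].
  have F0 := phase2 a0 Ta HeqA HZ i0 id Pi.
  exists (F 0)%:P, 1; split; first exact: oner_neq0.
  move=> e; rewrite /hahn_pmul size_poly1 big_ord1 coefC /= mul1r subr0.
  rewrite /hahn_of_poly size_polyC.
  have [e0|en0] := eqVneq e 0.
    rewrite e0; case: (eqVneq (F 0) 0) => [->|Fn0] /=; first by rewrite big_ord0.
    by rewrite big_ord1 eqxx coefC.
  rewrite F0 //; case: (F 0 != 0) => /=; first by rewrite big_ord1 (negPf en0).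
  by rewrite big_ord0.
move=> Hno.
have P0 : PA 0%N != 0.
  have [i [id Pi]] := HneA; case: i id Pi => [//|i] id Pi.
  by exfalso; apply: Hno; exists i.+1.
exists AA, (PA 0%N); split => // e.
rewrite -HeqA big_ord_recl /= big1 ?addr0.
  by rewrite /hahn_subst; apply: eq_bigr => k _; rewrite expr0 divr1.
move=> i _; case: (eqVneq (PA (bump 0 i)) 0) => [->|Pn0].
  by rewrite /hahn_pmul size_poly0 big_ord0.
by exfalso; apply: Hno; exists (bump 0 i); split => //; split => //; rewrite /bump /=; have := ltn_ord i.
Qed.
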